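(* The language $\mathtt{containment}$ is $\mathrm{NLD}(O(1))$-complete: $\mathtt{containment}\in\mathrm{NLD}(O(1))$, and every $\mathcal{L}\in\mathrm{NLD}(O(1))$ satisfies $\mathcal{L}\preceq\mathtt{containment}$.
   Context: Configurations are pairs $(G,\mathbf{x})$ with $G$ a finite connected graph and $\mathbf{x}:V(G)\to\{0,1\}^*$. A distributed language is a decidable set of configurations. Model: synchronous LOCAL model. Nodes have distinct identities (injective $\mathrm{Id}:V(G)\to\mathbb{N}$) and unbounded messages, and after $r$ rounds a node knows exactly its radius-$r$ ball (identities, inputs, certificates, adjacencies). $\mathtt{containment}$: each node's input encodes a pair $(\mathcal{E}(v),\mathcal{S}(v))$, where $\mathcal{E}(v)\in\{0,1\}^*$ and $\mathcal{S}(v)$ is a finite collection of finite sets of binary strings. Then $\mathtt{containment}=\{(G,(\mathcal{E},\mathcal{S})): \exists v\in V(G)\ \exists S\in\mathcal{S}(v)\ \text{with}\ S\supseteq\{\mathcal{E}(u):u\in V(G)\}\}$. Local reduction: $\mathcal{L}_1\preceq\mathcal{L}_2$ if there is a constant-time deterministic local algorithm which, for every configuration $(G,\mathbf{x})$ and every identity assignment, produces outputs $\mathrm{out}(v)\in\{0,1\}^*$ with $(G,\mathbf{x})\in\mathcal{L}_1\iff(G,\mathrm{out})\in\mathcal{L}_2$. $\mathrm{NLD}(t)$ is the class of languages $\mathcal{L}$ verifiable in time $t$ by a deterministic algorithm that also receives node certificates $\mathbf{y}:V(G)\to\{0,1\}^*$, such that: - for every $(G,\mathbf{x})\in\mathcal{L}$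 some certificate depending only on $(G,\mathbf{x})$ makes all nodes output ''yes'' under every identity assignment; - for every $(G,\mathbf{x})\notin\mathcal{L}$, every certificate and every identity assignment, some node outputs ''no''. $\mathrm{NLD}(O(1))=\bigcup_{c\in\mathbb{N}}\mathrm{NLD}(c)$. *)

(* Defs.v *)
From HB Require Import structures.
From mathcomp Require Import all_boot.
Unset Printing Implicit Defensive.

Record graph := Graph { gn : nat; gadj : 'I_gn -> 'I_gn -> bool }.
Arguments gadj : clear implicits.

Definition is_graph (G : graph) : Prop :=
  [/\ 0 < gn G, irreflexive (gadj G), symmetric (gadj G)
    & forall u v : 'I_(gn G), connect (gadj G) u v].

Fixpoint ball (G : graph) (r : nat) (v : 'I_(gn G)) : {set 'I_(gn G)} :=
  match r with
  | 0 => [set v]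
  | r'.+1 => let B := ball G r' v in
             B :|: [set u | [exists w in B, gadj G w u]]
  end.

Definition same_view (L : Type) (r : nat)
    (G1 : graph) (id1 : 'I_(gn G1) -> nat) (l1 : 'I_(gn G1) -> L) (v1 : 'I_(gn G1))
    (G2 : graph) (id2 : 'I_(gn G2) -> nat) (l2 : 'I_(gn G2) -> L) (v2 : 'I_(gn G2)) : Prop :=
  exists f : 'I_(gn G1) -> 'I_(gn G2),
    [/\ f v1 = v2,
        forall u, u \in ball G1 r v1 ->
          [/\ f u \in ball G2 r v2, id2 (f u) = id1 u & l2 (f u) = l1 u],
        forall u2, u2 \in ball G2 r v2 -> exists2 u, u \in ball G1 r v1 & f u = u2
      & forall u w, u \in ball G1 r v1 -> w \in ball G1 r v1 ->
          gadj G2 (f u) (f w) = gadj G1 u w].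

Definition algo (L O : Type) :=
  forall G : graph, ('I_(gn G) -> nat) -> ('I_(gn G) -> L) -> 'I_(gn G) -> O.

(** The algorithm runs in r rounds in the LOCAL model: a node's output only
    depends on its radius-r view (on connected graphs with distinct ids). *)
Definition local (L O : Type) (r : nat) (A : algo L O) : Prop :=
  forall (G1 : graph) (id1 : 'I_(gn G1) -> nat) (l1 : 'I_(gn G1) -> L) (v1 : 'I_(gn G1))
         (G2 : graph) (id2 : 'I_(gn G2) -> nat) (l2 : 'I_(gn G2) -> L) (v2 : 'I_(gn G2)),
    is_graph G1 -> is_graph G2 -> injective id1 -> injective id2 ->
    same_view L r G1 id1 l1 v1 G2 id2 l2 v2 ->
    A G1 id1 l1 v1 = A G2 id2 l2 v2.

(** Configurations with inputs of type X (X = seq bool for binary strings). *)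
Record config (X : Type) := Config { cgraph : graph; cinput : 'I_(gn cgraph) -> X }.
Arguments cinput {X}.
Arguments cgraph {X}.

Definition language (X : Type) := config X -> bool.

Definition NLD (X : Type) (t : nat) (Lg : language X) : Prop :=
  exists A : algo (X * seq bool) bool,
    [/\ local (X * seq bool) bool t A,
        forall C : config X, is_graph (cgraph C) -> Lg C ->
          exists y : 'I_(gn (cgraph C)) -> seq bool,
            forall id : 'I_(gn (cgraph C)) -> nat, injective id ->
              forall v, A (cgraph C) id (fun u => (cinput C u, y u)) v = true
      & forall C : config X, is_graph (cgraph C) -> Lg C = false ->
          forall (y : 'I_(gn (cgraph C)) -> seq bool) (id : 'I_(gn (cgraph C)) -> nat),
            injective id ->
            exists v, A (cgraph C) id (fun u => (cinput C u, y u)) v = false].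

Definition NLD_O1 {X : Type} (Lg : language X) : Prop := exists c, NLD X c Lg.

Definition local_reduction {X1 X2 : Type} (L1 : language X1) (L2 : language X2) : Prop :=
  exists (c : nat) (A : algo X1 X2),
    local X1 X2 c A /\
    forall C : config X1, is_graph (cgraph C) ->
      forall id : 'I_(gn (cgraph C)) -> nat, injective id ->
        L1 C = L2 (@Config X2 (cgraph C) (A (cgraph C) id (cinput C))).

(** Inputs of containment: a pair (E(v), S(v)), with finite sets of binary
    strings represented by sequences (membership semantics). *)
Definition cont_input := (seq bool * seq (seq (seq bool)))%type.

Definition containment : language cont_input := fun C =>
  [exists v : 'I_(gn (cgraph C)),
     has (fun S : seq (seq bool) =>
            [forall u : 'I_(gn (cgraph C)), (cinput C u).1 \in S])
         (cinput C v).2].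

(* Main.v *)
Require Import Defs.
From HB Require Import structures.
From mathcomp Require Import all_boot.
From Stdlib Require Import ClassicalEpsilon FunctionalExtensionality.

Set Implicit Arguments. Unset Strict Implicit.

Lemma ball_center G r v : v \in ball G r v.
Proof. elim: r => [|r IH] /=; first by rewrite inE. by rewrite inE IH. Qed.

Lemma ball1 G (v u : 'I_(gn G)) : (u \in ball G 1 v) = (u == v) || gadj G v u.
Proof.
rewrite /= !inE; congr (_ || _); apply/existsP/idP => [[w /andP[]]|].
  by rewrite inE => /eqP ->.
by move=> h; exists v; rewrite inE eqxx.
Qed.

Section View1.
Variables (L : Type) (G1 : graph) (id1 : 'I_(gn G1) -> nat) (l1 : 'I_(gn G1) -> L) (v1 : 'I_(gn G1))
         (G2 : graph) (id2 : 'I_(gn G2) -> nat) (l2 : 'I_(gn G2) -> L) (v2 : 'I_(gn G2)).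
Hypothesis SV : same_view L 1 G1 id1 l1 v1 G2 id2 l2 v2.

Lemma view1_center : l1 v1 = l2 v2.
Proof.
case: SV => f [fv H1 _ _]; have [_ _ <-] := H1 v1 (ball_center 1 v1).
by rewrite fv.
Qed.

Lemma view1_forall (P : L -> bool) :
  [forall w, gadj G1 v1 w ==> P (l1 w)] = [forall w, gadj G2 v2 w ==> P (l2 w)].
Proof.
case: SV => f [fv H1 H2 H3].
apply/forallP/forallP => H w; apply/implyP => a.
- have wb : w \in ball G2 1 v2 by rewrite ball1 a orbT.
  have [u ub fu] := H2 w wb.
  have [_ _ lu] := H1 u ub.
  have : gadj G1 v1 u by rewrite -H3 ?ball_center // fv fu.
  by move=> /(implyP (H u)); rewrite -fu lu.
- have ub : w \in ball G1 1 v1 by rewrite ball1 a orbT.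
  have [_ _ lu] := H1 w ub.
  have : gadj G2 v2 (f w) by rewrite -fv H3 ?ball_center.
  by move=> /(implyP (H (f w))); rewrite lu.
Qed.

Lemma view1_exists (P : L -> bool) :
  [exists w, gadj G1 v1 w && P (l1 w)] = [exists w, gadj G2 v2 w && P (l2 w)].
Proof.
apply/negb_inj; rewrite !negb_exists.
have E := view1_forall (fun z => ~~ P z).
transitivity [forall w, gadj G1 v1 w ==> ~~ P (l1 w)].
  by apply: eq_forallb => w; rewrite negb_and implybE.
by rewrite E; apply: eq_forallb => w; rewrite negb_and implybE.
Qed.
End View1.

Definition enc (p : seq (seq bool) * nat) : seq bool := nseq (pickle p) true.
Definition dec (s : seq bool) : seq (seq bool) * nat := odflt ([::], 0) (unpickle (size s)).
Lemma encK p : dec (enc p) = p.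
Proof. by rewrite /dec /enc size_nseq pickleK. Qed.

Definition verif : algo (cont_input * seq bool) bool := fun G id l v =>
  [&& (l v).1.1 \in (dec (l v).2).1,
      [forall w, gadj G v w ==> ((dec (l w).2).1 == (dec (l v).2).1)] &
      if (dec (l v).2).2 == 0 then (dec (l v).2).1 \in (l v).1.2
      else [exists w, gadj G v w && ((dec (l w).2).2 < (dec (l v).2).2)]].

Lemma verif_local : local _ _ 1 verif.
Proof.
move=> G1 id1 l1 v1 G2 id2 l2 v2 _ _ _ _ SV.
rewrite /verif (view1_center SV).
rewrite (view1_forall SV (fun z => (dec z.2).1 == (dec (l2 v2).2).1)).
by rewrite (view1_exists SV (fun z => (dec z.2).2 < (dec (l2 v2).2).2)).
Qed.

Set Implicit Arguments. Unset Strict Implicit.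

Lemma ball_step G k (v0 x y : 'I_(gn G)) : x \in ball G k v0 -> gadj G x y -> y \in ball G k.+1 v0.
Proof. by move=> xb a; rewrite /= inE; apply/orP; right; rewrite inE; apply/existsP; exists x; rewrite xb. Qed.

Lemma reach_aux G (v0 : 'I_(gn G)) p : forall x k, x \in ball G k v0 ->
  path (gadj G) x p -> exists k', last x p \in ball G k' v0.
Proof.
elim: p => [|y p IH] x k /=; first by exists k.
by move=> xb /andP[a pp]; apply: (IH y k.+1 _ pp); apply: ball_step xb a.
Qed.

Lemma reach G (v0 u : 'I_(gn G)) : connect (gadj G) v0 u -> exists k, u \in ball G k v0.
Proof.
move=> /connectP[p pp ->]; apply: (reach_aux (k := 0)) pp; exact: ball_center.
Qed.

Lemma ball_mono G k j (v0 u : 'I_(gn G)) : j <= k -> u \in ball G j v0 -> u \in ball G k v0.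
Proof.
move=> /subnK <-; elim: (k - j) => [|i IH] //= h.
by rewrite inE IH.
Qed.

Lemma part1 : NLD_O1 containment.
Proof.
exists 1, verif; split; first exact: verif_local.
- case=> G x /= [n0 irr sym conn] /existsP[v0 /hasP[S0 S0in /forallP allS]].
  have R u := reach (conn v0 u).
  pose dist u := ex_minn (R u).
  have dball u : u \in ball G (dist u) v0 by rewrite /dist; case: ex_minnP.
  have dmin u k : u \in ball G k v0 -> dist u <= k by rewrite /dist; case: ex_minnP => m _ H /H.
  exists (fun u => enc (S0, dist u)) => id _ u.
  rewrite /verif /= !encK /= allS /=; apply/andP; split.
    by apply/forallP => w; rewrite encK eqxx implybT.
  case: eqP => [d0|dn0].
    by move: (dball u); rewrite d0 /= inE => /eqP ->.
  move: (dball u); case E: (dist u) dn0 => [|k] // _ /=; rewrite inE => /orP[|].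
    by move=> /dmin; rewrite E ltnn.
  rewrite inE => /existsP[w /andP[wb a]]; apply/existsP; exists w.
  by rewrite sym a encK /= ltnS dmin.
- case=> G x /= [n0 irr sym conn] Hf y id _.
  case: (boolP [forall v, @verif G id (fun u => (x u, y u)) v]); last first.
    by rewrite negb_forall => /existsP[v /negbTE]; exists v.
  move=> /forallP allv; exfalso; suff: containment {| cgraph := G; cinput := x |} by rewrite Hf.
  pose i0 := Ordinal n0.
  have ok v := allv v; rewrite /verif /= in ok.
  have Seq u w : gadj G u w -> (dec (y u)).1 = (dec (y w)).1.
    move=> a; case/and3P: (ok u) => _ /forallP/(_ w); rewrite a /= => /eqP -> _ //.
  have cl : closed (gadj G) [pred u | (dec (y u)).1 == (dec (y i0)).1].
    by move=> u w /Seq; rewrite !inE => ->.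
  have Sall u : (dec (y u)).1 = (dec (y i0)).1.
    apply/eqP; have := closed_connect cl (conn i0 u).
    by rewrite !inE eqxx => <-.
  case: (arg_minnP (fun v => (dec (y v)).2) (isT : predT i0)) => v _ vmin.
  apply/existsP; exists v; apply/hasP; exists (dec (y v)).1.
    case/and3P: (ok v) => _ _; case: eqP => // dn.
    move=> /existsP[w /andP[_ lt]]; have := vmin w isT; by rewrite leqNgt lt.
  apply/forallP => u; case/and3P: (ok u) => + _ _; by rewrite Sall -(Sall v).
Qed.

Set Implicit Arguments. Unset Strict Implicit.

Lemma pickle_inj (T : countType) : injective (@pickle T).
Proof. exact: pcan_inj pickleK. Qed.

Definition nbrs G t (id : 'I_(gn G) -> nat) (v w : 'I_(gn G)) : seq nat :=
  sort leq [seq id z | z <- enum (ball G t v) & gadj G w z].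
Definition item G t (id : 'I_(gn G) -> nat) (x : 'I_(gn G) -> seq bool) v w :=
  (id w, (x w, nbrs t id v w)).
Definition data G t (id : 'I_(gn G) -> nat) (x : 'I_(gn G) -> seq bool) v :=
  (id v, sort leq [seq pickle (item t id x v w) | w <- enum (ball G t v)]).
Definition Enc G t (id : 'I_(gn G) -> nat) (x : 'I_(gn G) -> seq bool) v : seq bool :=
  nseq (pickle (data t id x v)) true.

Lemma Enc_inj G1 G2 t id1 x1 v1 id2 x2 v2 :
  @Enc G1 t id1 x1 v1 = @Enc G2 t id2 x2 v2 -> data t id1 x1 v1 = data t id2 x2 v2.
Proof. by move=> /(congr1 size); rewrite !size_nseq => /pickle_inj. Qed.

Lemma sortP (s1 s2 : seq nat) : reflect (sort leq s1 = sort leq s2) (perm_eq s1 s2).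
Proof. exact: (perm_sortP leq_total leq_trans anti_leq). Qed.

Lemma mem_nbrs G t (id : _ -> nat) (v w z : 'I_(gn G)) : injective id -> z \in ball G t v ->
  (id z \in nbrs t id v w) = gadj G w z.
Proof.
move=> inj zb; rewrite /nbrs mem_sort; apply/mapP/idP => [[z' ]|a].
  by rewrite mem_filter => /andP[a _] /inj ->.
by exists z => //; rewrite mem_filter a mem_enum.
Qed.

Lemma uniq_nbrs G t (id : _ -> nat) (v w : 'I_(gn G)) : injective id ->
  uniq [seq id z | z <- enum (ball G t v) & gadj G w z].
Proof. by move=> inj; rewrite (map_inj_uniq inj) filter_uniq ?enum_uniq. Qed.

Lemma data_of_view G1 G2 t id1 x1 v1 id2 x2 v2 :
  injective id1 -> injective id2 ->
  same_view (seq bool) t G1 id1 x1 v1 G2 id2 x2 v2 ->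
  data t id1 x1 v1 = data t id2 x2 v2.
Proof.
move=> inj1 inj2 [f [fv H1 H2 H3]].
have enb w : w \in ball G1 t v1 -> nbrs t id1 v1 w = nbrs t id2 v2 (f w).
  move=> wb; apply/sortP/uniq_perm; rewrite ?uniq_nbrs // => k.
  apply/mapP/mapP => [[z]|[z2]].
    rewrite mem_filter mem_enum => /andP[a zb] ->.
    have [fzb idz _] := H1 z zb.
    exists (f z); last by rewrite idz.
    by rewrite mem_filter mem_enum fzb H3 // a.
  rewrite mem_filter mem_enum => /andP[a zb] ->.
  have [z zb1 fz] := H2 z2 zb; have [_ idz _] := H1 z zb1.
  exists z; last by rewrite -fz idz.
  by rewrite mem_filter mem_enum zb1 -H3 // fz a.
have eit w : w \in ball G1 t v1 -> item t id1 x1 v1 w = item t id2 x2 v2 (f w).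
  move=> wb; have [_ e1 e2] := H1 w wb; by rewrite /item e1 e2 enb.
have iinj G id x v : injective id -> injective (fun w => pickle (@item G t id x v w)).
  by move=> inj w w' /pickle_inj [] /inj.
rewrite /data; congr pair.
  by have [_ <- _] := H1 v1 (ball_center t v1); rewrite fv.
apply/sortP/uniq_perm; rewrite ?(map_inj_uniq (iinj _ _ _ _ _)) ?enum_uniq // => p.
apply/mapP/mapP => [[w]|[w2]].
  rewrite mem_enum => wb ->; have [fb _ _] := H1 w wb.
  by exists (f w); rewrite ?mem_enum ?eit.
rewrite mem_enum => wb ->; have [w wb1 fw] := H2 w2 wb.
by exists w; rewrite ?mem_enum ?eit ?fw.
Qed.

Lemma view_of_data G1 G2 t id1 x1 v1 id2 x2 v2 (y2 : 'I_(gn G2) -> seq bool)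
   (g : 'I_(gn G1) -> 'I_(gn G2)) :
  injective id1 -> injective id2 ->
  (forall w1 w2, id2 w2 = id1 w1 -> g w1 = w2) ->
  data t id1 x1 v1 = data t id2 x2 v2 ->
  same_view (seq bool * seq bool) t G1 id1 (fun u => (x1 u, y2 (g u))) v1
                                    G2 id2 (fun u => (x2 u, y2 u)) v2.
Proof.
move=> inj1 inj2 gH [eid /sortP/perm_mem eS].
have corr w : w \in ball G1 t v1 -> exists2 w2, w2 \in ball G2 t v2 & item t id2 x2 v2 w2 = item t id1 x1 v1 w.
  move=> wb; have : pickle (item t id1 x1 v1 w) \in [seq pickle (item t id1 x1 v1 w) | w <- enum (ball G1 t v1)].
    by apply: map_f; rewrite mem_enum.
  rewrite eS => /mapP[w2]; rewrite mem_enum => w2b /pickle_inj e.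
  by exists w2.
have corr2 w2 : w2 \in ball G2 t v2 -> exists2 w, w \in ball G1 t v1 & item t id1 x1 v1 w = item t id2 x2 v2 w2.
  move=> wb; have : pickle (item t id2 x2 v2 w2) \in [seq pickle (item t id2 x2 v2 w) | w <- enum (ball G2 t v2)].
    by apply: map_f; rewrite mem_enum.
  rewrite -eS => /mapP[w]; rewrite mem_enum => wb1 /pickle_inj e.
  by exists w.
have gok w : w \in ball G1 t v1 -> g w \in ball G2 t v2 /\ item t id2 x2 v2 (g w) = item t id1 x1 v1 w.
  move=> wb; have [w2 w2b e] := corr w wb.
  have -> : g w = w2 by apply: gH; case: e.
  by [].
exists g; split.
- by apply: gH.
- move=> u ub; have [gb] := gok u ub; rewrite /item => -[e1 e2 _].
  by rewrite gb e1 e2.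
- move=> u2 ub2; have [w wb e] := corr2 u2 ub2.
  by exists w => //; apply: gH; case: e.
- move=> u w ub wb.
  have [gub [_ _ en]] := gok u ub; have [gwb [ei _ _]] := gok w wb.
  by rewrite -(@mem_nbrs G2 t id2 v2 (g u) (g w) inj2 gwb) ei en mem_nbrs.
Qed.

Set Implicit Arguments. Unset Strict Implicit.

Definition BT (W m : nat) : finType :=
  ({ffun 'I_m * 'I_m -> bool} * {ffun 'I_m -> 'I_W.+1} * {ffun 'I_m -> W.-bseq bool})%type.
Definition adjof W m (b : BT W m) : 'I_m -> 'I_m -> bool := fun a c => b.1.1 (a, c).
Definition idof W m (b : BT W m) : 'I_m -> nat := fun u => val (b.1.2 u).
Definition xof W m (b : BT W m) : 'I_m -> seq bool := fun u => val (b.2 u).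

Section Red.
Variables (Lg : language (seq bool)) (t : nat).

Definition EsetOf m (adj : 'I_m -> 'I_m -> bool) (id : 'I_m -> nat) (x : 'I_m -> seq bool) :=
  [seq @Enc (Graph m adj) t id x u | u <- enum 'I_m].
Definition validP m (adj : 'I_m -> 'I_m -> bool) (id : 'I_m -> nat) (x : 'I_m -> seq bool) :=
  is_graph (Graph m adj) /\ injective id /\ Lg (@Config _ (Graph m adj) x).
Definition validb m adj id x : bool :=
  if excluded_middle_informative (@validP m adj id x) then true else false.
Definition Esets W m :=
  [seq EsetOf (@adjof W m b) (idof b) (xof b) | b <- enum (BT W m) &
     validb (@adjof W m b) (idof b) (xof b)].
Definition Sv W := flatten [seq Esets W m | m <- iota 0 W.+2].
Definition Red : algo (seq bool) cont_input := fun G id x v =>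
  (@Enc G t id x v, Sv (id v + size (x v))).

Lemma Red_local : local _ _ t Red.
Proof.
move=> G1 id1 x1 v1 G2 id2 x2 v2 _ _ inj1 inj2 SV.
rewrite /Red /Enc (data_of_view inj1 inj2 SV).
case: SV => f [fv H1 _ _]; have [_ <- <-] := H1 v1 (ball_center t v1).
by rewrite fv.
Qed.
End Red.

Unset Implicit Arguments. Unset Strict Implicit.

Section Transfer.
Variables (Lg : language (seq bool)) (t : nat) (A : algo (seq bool * seq bool) bool).
Hypothesis Aloc : local (seq bool * seq bool) bool t A.
Hypothesis Acomp : forall C : config (seq bool), is_graph (cgraph C) -> Lg C ->
          exists y : 'I_(gn (cgraph C)) -> seq bool,
            forall id : 'I_(gn (cgraph C)) -> nat, injective id ->
              forall v, A (cgraph C) id (fun u => (cinput C u, y u)) v = true.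
Hypothesis Asound : forall C : config (seq bool), is_graph (cgraph C) -> Lg C = false ->
          forall (y : 'I_(gn (cgraph C)) -> seq bool) (id : 'I_(gn (cgraph C)) -> nat),
            injective id ->
            exists v, A (cgraph C) id (fun u => (cinput C u, y u)) v = false.

Lemma transfer G (x : 'I_(gn G) -> seq bool) (id : 'I_(gn G) -> nat) G' (x' : 'I_(gn G') -> seq bool) (id' : 'I_(gn G') -> nat) :
  is_graph G -> injective id -> is_graph G' -> injective id' -> Lg (@Config _ G' x') ->
  (forall u, exists u', @Enc G t id x u = @Enc G' t id' x' u') -> Lg (@Config _ G x).
Proof.
move=> gG inj gG' inj' L' H.
apply/negPn/negP => /negbTE Hf.
have [y' Hy'] := Acomp (@Config _ G' x') gG' L'.
have [n0' _ _ _] := gG'; pose d := Ordinal n0'.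
pose g w := odflt d [pick z | id' z == id w].
have gH w1 w2 : id' w2 = id w1 -> g w1 = w2.
  move=> e; rewrite /g; case: pickP => [z /eqP ez|none] /=.
    by apply: inj'; rewrite ez e.
  by have := none w2; rewrite e eqxx.
have [v Hv] := Asound (@Config _ G x) gG Hf (fun u => y' (g u)) id inj.
have [v' /Enc_inj ed] := H v.
have SV := view_of_data y' inj inj' gH ed.
have := Aloc _ _ _ _ _ _ _ _ gG gG' inj inj' SV.
by rewrite /= in Hv; rewrite Hv Hy'.
Qed.
End Transfer.

Unset Implicit Arguments. Unset Strict Implicit.

Lemma part2 (Lg : language (seq bool)) : NLD_O1 Lg -> local_reduction Lg containment.
Proof.
case=> t [A [Aloc Acomp Asound]].
exists t, (Red Lg t); split; first exact: Red_local.
case=> [[n adj] x] /= gG id inj.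
apply/idP/idP => [HL|].
- have [n0 _ _ _] := gG; pose i0 : 'I_n := Ordinal n0.
  case: (arg_maxnP (fun v => id v + size (x v)) (isT : predT i0)) => v _ vmax.
  set W := id v + size (x v) in vmax *.
  have idb u : id u < W.+1 by rewrite ltnS (leq_trans _ (vmax u isT)) ?leq_addr.
  have xb u : size (x u) <= W by rewrite (leq_trans _ (vmax u isT)) ?leq_addl.
  have nb : n < W.+2.
    have inj' : injective (fun u : 'I_n => (Ordinal (idb u) : 'I_W.+1)).
      by move=> a c [] /inj.
    by have := leq_card _ inj'; rewrite !card_ord.
  apply/existsP; exists v; apply/hasP; exists (EsetOf t adj id x); last first.
    by apply/forallP => u /=; apply: map_f; rewrite mem_enum.
  rewrite /= /Sv; apply/flattenP; exists (Esets Lg t W n).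
    by apply: map_f; rewrite mem_iota.
  pose b : BT W n := ([ffun p => adj p.1 p.2], [ffun u => Ordinal (idb u)],
                      [ffun u => insub_bseq W (x u)]).
  have e1 : adjof b = adj.
    by apply: functional_extensionality => a; apply: functional_extensionality => c; rewrite /adjof ffunE.
  have e2 : idof b = id.
    by apply: functional_extensionality => a; rewrite /idof ffunE.
  have e3 : xof b = x.
    apply: functional_extensionality => a; rewrite /xof ffunE /insub_bseq insubdK //.
    exact: xb.
  apply/mapP; exists b; last by rewrite e1 e2 e3.
  rewrite mem_filter mem_enum andbT e1 e2 e3 /validb.
  by case: excluded_middle_informative => // [[]]; split.
- move=> /existsP[v /hasP[S Sin /forallP allu]].
  move: Sin; rewrite /= /Sv => /flattenP[Ss /mapP[m _ ->]].
  move=> /mapP[b]; rewrite mem_filter => /andP[vb _] eS.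
  move: vb; rewrite /validb; case: excluded_middle_informative => // [[gG' [inj' L']]] _.
  apply: (@transfer _ _ _ Aloc Acomp Asound _ _ _ _ _ _ gG inj gG' inj' L').
  move=> u; have := allu u; rewrite /= eS => /mapP[u' _ e].
  by exists u'.
Qed.

Theorem theorem6 :
  NLD_O1 containment /\
  (forall Lg : language (seq bool), NLD_O1 Lg -> local_reduction Lg containment).
Proof. split; [exact: part1 | exact: part2]. Qed.
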